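(* Let $\mathcal{R}$ be a cell space with finite stabiliser $G_0$, let $F,F'$ be finite subsets of $M$ and let $\mathfrak{g},\mathfrak{g}'\in G/G_0$. Then $|(\cdot\triangleleft\mathfrak{g})^{-1}(F)\setminus(\cdot\triangleleft\mathfrak{g}')^{-1}(F')|\leq|G_0|^2\cdot\max_{g\in\mathfrak{g}}|F\setminus(\cdot\triangleleft g^{-1}\cdot\mathfrak{g}')^{-1}(F')|$ and $|(\cdot\triangleleft\mathfrak{g})^{-1}(F)\setminus(\cdot\triangleleft\mathfrak{g}')^{-1}(F')|\leq|G_0|^2\cdot\max_{g'\in\mathfrak{g}'}|(\cdot\triangleleft(g')^{-1}\cdot\mathfrak{g})^{-1}(F)\setminus F'|$.
   Context: A cell space $\mathcal{R}$ consists of a group $G$ acting transitively on the left on a nonempty set $M$ via $\triangleright$, a point $m_0\in M$ and a family $(g_{m_0,m})_{m\in M}$ in $G$ with $g_{m_0,m}\triangleright m_0=m$. $G_0$ is the stabiliser of $m_0$, $G/G_0$ the set of left cosets (elements are subsets of $G$), with $G$ acting by $g\cdot hG_0=ghG_0$. The right semi-action $\triangleleft\colon M\times G/G_0\to M$ is $m\triangleleft gG_0=g_{m_0,m}g\triangleright m_0$, and $(\cdot\triangleleft\mathfrak{h})^{-1}(B)=\{m\in M: m\triangleleft\mathfrak{h}\in B\}$. *)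

(* Defs.v *)
From HB Require Import structures.
From mathcomp Require Import all_boot all_order.
From mathcomp Require Import boolp classical_sets functions cardinality.
From mathcomp Require Import finmap.

Set Implicit Arguments.
Unset Strict Implicit.
Unset Printing Implicit Defensive.

Local Open Scope classical_set_scope.
Local Open Scope group_scope.

Record cell_space (G : groupType) (M : choiceType) := CellSpace {
  act : G -> M -> M;
  act1 : forall m, act 1 m = m;
  actM : forall g h m, act (g * h) m = act g (act h m);
  act_transitive : forall m m', exists g, act g m = m';
  m0 : M;
  gm : M -> G;
  gmP : forall m, act (gm m) m0 = m
}.

Section CellSpaceDefs.
Context {G : groupType} {M : choiceType} (R : cell_space G M).

Definition stab : set G := [set g | act R g (m0 R) = m0 R].

Definition lcoset (g : G) : set G := [set g * h | h in stab].

(* membership in G/G_0 (elements of G/G_0 are subsets of G) *)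
Definition is_lcoset (A : set G) : Prop := exists g, A = lcoset g.

Definition coset_act (g : G) (A : set G) : set G := [set g * h | h in A].

(* the right semi-action  m <| gG_0 = g_{m0,m} g |> m0, computed on a chosen
   representative of the coset (well defined on cosets) *)
Definition rsemi (m : M) (A : set G) : M :=
  act R (gm R m * xget 1 A) (m0 R).

Definition rsemi_preim (A : set G) (B : set M) : set M :=
  [set m | B (rsemi m A)].

End CellSpaceDefs.

(* Main.v *)
Require Import Defs.
From HB Require Import structures.
From mathcomp Require Import all_boot all_order.
From mathcomp Require Import boolp classical_sets functions cardinality.
From mathcomp Require Import finmap.

Local Open Scope classical_set_scope.
Local Open Scope group_scope.

Section Helpers.
Context {G : groupType} {M : choiceType} (R : cell_space G M).

Lemma actV (g : G) m : act R g^-1 (act R g m) = m.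
Proof. by rewrite -actM monoid.mulVg act1. Qed.

Lemma mulKVg' (x y : G) : x * (x^-1 * y) = y.
Proof. by rewrite monoid.mulgA monoid.mulgV monoid.mul1g. Qed.

Lemma kinv' (a b : G) : b * (a^-1 * b)^-1 = a.
Proof. by rewrite monoid.invgM monoid.invgK monoid.mulgA monoid.mulgV monoid.mul1g. Qed.

Lemma stab1 : stab R 1.
Proof. by rewrite /stab /= act1. Qed.

Lemma rsemi_lcoset m x : rsemi R m (lcoset R x) = act R (gm R m * x) (m0 R).
Proof.
rewrite /rsemi.
have : lcoset R x (xget 1 (lcoset R x)).
  apply: xgetPex; exists (x * 1); exists 1 => //; exact: stab1.
case=> h hs <-.
by rewrite monoid.mulgA (actM R _ h) hs.
Qed.

Lemma coset_act_lcoset y x : coset_act y (lcoset R x) = lcoset R (y * x).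
Proof.
apply/seteqP; split => z /=.
  by case=> _ [h hs <-] <-; exists h => //; rewrite monoid.mulgA.
by case=> h hs <-; exists (x * h); [exists h|rewrite monoid.mulgA].
Qed.

Lemma lcoset_finite x : finite_set (stab R) -> finite_set (lcoset R x).
Proof. by move=> fs; apply: finite_image. Qed.

Lemma lcoset_card x : finite_set (stab R) ->
  (#|` fset_set (lcoset R x)| <= #|` fset_set (stab R)|)%N.
Proof.
move=> fs; rewrite /lcoset fset_set_image //.
exact: leq_imfset_card.
Qed.

Lemma preim_finite x F : finite_set (stab R) -> finite_set F ->
  finite_set (rsemi_preim R (lcoset R x) F).
Proof.
move=> fs fF.
apply: (@sub_finite_set _ _
  [set act R (gm R p.1 * p.2 * x^-1) (m0 R) | p in F `*` stab R]).
  move=> m; rewrite /rsemi_preim /= rsemi_lcoset => Fm.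
  set f := act R (gm R m * x) (m0 R) in Fm *.
  exists (f, (gm R f)^-1 * (gm R m * x)) => /=.
    split => //=; rewrite /stab /= (actM R (gm R f)^-1) -/f.
    by rewrite -[X in act R _ X](gmP R f) actV.
  by rewrite !monoid.mulgA monoid.mulgV monoid.mul1g monoid.mulgK gmP.
by apply: finite_image; apply: finite_setX.
Qed.

Lemma card_bigU (I : choiceType) (s : seq I) (A : I -> set M) N :
  (forall k, k \in s -> finite_set (A k) /\ (#|` fset_set (A k)| <= N)%N) ->
  finite_set (\big[setU/set0]_(k <- s) A k) /\
  (#|` fset_set (\big[setU/set0]_(k <- s) A k)| <= size s * N)%N.
Proof.
elim: s => [|k s IH] H.
  by rewrite big_nil fset_set0; split.
have [fk ck] := H k (mem_head _ _).
have [fs cs] : finite_set (\big[setU/set0]_(k <- s) A k) /\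
  (#|` fset_set (\big[setU/set0]_(k <- s) A k)| <= size s * N)%N.
  by apply: IH => j js; apply: H; rewrite in_cons js orbT.
rewrite big_cons; split; first by rewrite finite_setU.
rewrite fset_setU // /= mulSn.
apply: leq_trans (leq_card_fsetU _ _) _.
exact: leq_add.
Qed.

End Helpers.

Lemma key_bound {G : groupType} {M : choiceType} (R : cell_space G M)
  (L : set M) (gg : set G) (T : G -> set M) (N : nat) :
  finite_set (stab R) -> is_lcoset R gg ->
  (forall k, gg k -> finite_set (T k)) ->
  (forall k, gg k -> (#|` fset_set (T k)| <= N)%N) ->
  (forall m, L m -> exists k, gg k /\
       exists f, T k f /\ act R (gm R f * k^-1) (m0 R) = m) ->
  (#|` fset_set L| <= #|` fset_set (stab R)| ^ 2 * N)%N.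
Proof.
move=> fs [g ->] fT cT HL.
have fg := lcoset_finite R g fs.
set U := \big[setU/set0]_(k <- fset_set (lcoset R g))
           [set act R (gm R f * k^-1) (m0 R) | f in T k].
have [fU cU] : finite_set U /\
  (#|` fset_set U| <= size (fset_set (lcoset R g)) * N)%N.
  apply: card_bigU => k; rewrite in_fset_set // => /set_mem gk; split.
    exact: finite_image (fT _ gk).
  rewrite fset_set_image; last exact: fT.
  apply: leq_trans _ (cT _ gk); exact: leq_imfset_card.
have LU : L `<=` U.
  rewrite /U bigsetU_fset_set // => m /HL [k [gk [f [Tf <-]]]].
  by exists k => //; exists f.
have fL : finite_set L := sub_finite_set LU fU.
apply: (@leq_trans #|` fset_set U|).
  by apply: fsubset_leq_card; rewrite -fset_set_sub.
apply: leq_trans cU _; apply: leq_mul => //.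
apply: leq_trans (lcoset_card R g fs) _.
case: #|` _| => // n; rewrite expnS; apply: leq_pmulr => //.
Qed.

Theorem lemma6 (G : groupType) (M : choiceType) (R : cell_space G M)
  (F F' : set M) (gg gg' : set G) :
  finite_set (stab R) -> finite_set F -> finite_set F' ->
  is_lcoset R gg -> is_lcoset R gg' ->
  (#|` fset_set (rsemi_preim R gg F `\` rsemi_preim R gg' F')| <=
     #|` fset_set (stab R)| ^ 2 *
     \max_(g <- fset_set gg)
        #|` fset_set (F `\` rsemi_preim R (coset_act (g^-1)%g gg') F')|)%N
  /\
  (#|` fset_set (rsemi_preim R gg F `\` rsemi_preim R gg' F')| <=
     #|` fset_set (stab R)| ^ 2 *
     \max_(g' <- fset_set gg')
        #|` fset_set (rsemi_preim R (coset_act (g'^-1)%g gg) F `\` F')|)%N.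
Proof.
move=> fs fF fF' hgg hgg'.
have hgg0 := hgg; have hgg'0 := hgg'.
move: hgg hgg' => [g eg] [g' eg'].
have fgg : finite_set gg by rewrite eg; exact: lcoset_finite.
have fgg' : finite_set gg' by rewrite eg'; exact: lcoset_finite.
have kmem : forall (x : G) m f, act R (gm R m * x) (m0 R) = f ->
    lcoset R x ((gm R m)^-1 * gm R f).
  move=> x m f Hf; exists (x^-1 * ((gm R m)^-1 * gm R f)).
    rewrite /stab /= (actM R x^-1) (actM R (gm R m)^-1) gmP -Hf (actM R (gm R m)).
    by rewrite !actV.
  exact: mulKVg'.
have kinv : forall m f : M, gm R f * ((gm R m)^-1 * gm R f)^-1 = gm R m.
  by move=> m f; exact: kinv'.
split.
- apply: (@key_bound _ _ R _ gg (fun k => F `\` rsemi_preim R (coset_act k^-1 gg') F')) => //.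
  + by move=> k _; apply: (sub_finite_set _ fF) => x [].
  + move=> k gk; apply: leq_bigmax_seq => //.
    by rewrite in_fset_set // mem_set.
  + move=> m [Fm nF'm]; rewrite /rsemi_preim /= eg rsemi_lcoset in Fm.
    set f := act R (gm R m * g) (m0 R) in Fm.
    exists ((gm R m)^-1 * gm R f); split; first by rewrite eg; exact: kmem.
    exists f; split; last by rewrite kinv gmP.
    split => //; rewrite /rsemi_preim /= eg' coset_act_lcoset rsemi_lcoset.
    by rewrite monoid.mulgA kinv -rsemi_lcoset -eg'.
- apply: (@key_bound _ _ R _ gg' (fun k => rsemi_preim R (coset_act k^-1 gg) F `\` F')) => //.
  + move=> k _; have := preim_finite R (k^-1 * g) F fs fF.
    rewrite -coset_act_lcoset -eg; apply: sub_finite_set => x [] //.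
  + move=> k gk; apply: leq_bigmax_seq => //.
    by rewrite in_fset_set // mem_set.
  + move=> m [Fm nF'm]; rewrite /rsemi_preim /= eg' rsemi_lcoset in nF'm.
    set f := act R (gm R m * g') (m0 R) in nF'm.
    exists ((gm R m)^-1 * gm R f); split; first by rewrite eg'; exact: kmem.
    exists f; split; last by rewrite kinv gmP.
    split => //; rewrite /rsemi_preim /= eg coset_act_lcoset rsemi_lcoset.
    by rewrite monoid.mulgA kinv -rsemi_lcoset -eg.
Qed.
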